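(* Let $G\subset E'$ be a separating linear subspace, let $(T^{E}_{m},T^{\mathbb{K}}_{m})_{m\in\mathcal{M}}$ be a strong, consistent family for $(\mathcal{FV},E)$, and let $U$ be a set of uniqueness for $\mathcal{FV}(\Omega)$. Then the restriction map \[ R_{U,G}\colon S(\mathcal{FV}(\Omega)\varepsilon E)\to \mathcal{FV}_{G}(U,E),\quad f\mapsto (T^{E}_{m}(f)(x))_{(m,x)\in U}, \] is injective.
   Context: $\mathbb{K}\in\{\mathbb{R},\mathbb{C}\}$; $E$ is a non-trivial locally convex Hausdorff space (lcHs) over $\mathbb{K}$ with a directed fundamental system of seminorms $(p_\alpha)_{\alpha\in\mathfrak{A}}$ (for $E=\mathbb{K}$ the system is $\{|\cdot|\}$); $E'$ is its topological dual. A linear subspace $G\subset E'$ is separating if $e'(x)=0$ for all $e'\in G$ implies $x=0$. Weighted function spaces: Let $\Omega,J,L$ be non-empty sets, $(M_l)_{l\in L}$ non-empty sets and $\mathcal{V}=((\nu_{j,l,m})_{m\in M_l})_{j\in J,l\in L}$ functions $\nu_{j,l,m}\colon\Omega\to[0,\infty)$ such that for all $x\in\Omega$, $l\in L$ there is $j\in J$ with $\nu_{j,l,m}(x)>0$ for all $m\in M_l$. Let $\mathcal{M}_{\mathrm{top}}:=\bigcup_{l}M_l$ and $\mathcal{M}_0,\mathcal{M}_r$ sets such that the three are pairwise disjoint; $\mathcal{M}:=\mathcal{M}_{\mathrm{top}}\cup\mathcal{M}_0\cup\mathcal{M}_r$. Let $(\omega_m)_{m\in\mathcal{M}}$ be non-empty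 sets with $\Omega\subset\omega_m$ for $m\in\mathcal{M}_{\mathrm{top}}$. For $F\in\{E,\mathbb{K}\}$ let $T^{F}_m\colon \operatorname{dom}T^F_m\subset F^\Omega\to F^{\omega_m}$ be linear maps, $m\in\mathcal{M}$. Put $W(\Omega,F):=\bigcap_{m\in\mathcal{M}}\operatorname{dom}T^F_m\cap\bigcap_{m\in\mathcal{M}_0}\ker T^F_m$ and $\mathcal{FV}(\Omega,F):=\{f\in W(\Omega,F): |f|_{j,l,\alpha}<\infty\ \forall j\in J,l\in L,\alpha\}$ where $|f|_{j,l,\alpha}:=\sup_{x\in\Omega,m\in M_l}p_\alpha(T^F_m(f)(x))\nu_{j,l,m}(x)$, topologised by these seminorms; $\mathcal{FV}(\Omega):=\mathcal{FV}(\Omega,\mathbb{K})$ with seminorms $|f|_{j,l}$. Write $T^F_{m,x}(f):=T^F_m(f)(x)$. Such a space is a dom-space if its system of seminorms is directed and, in the scalar case, all point evaluations $\delta_x\colon f\mapsto f(x)$, $x\in\Omega$, are continuous on $\mathcal{FV}(\Omega)$. $\mathcal{FV}(\Omega)\varepsilon E$ is the space of continuous linear maps $\mathcal{FV}(\Omega)'_\kappa\to E$ ($\kappa$: topology of uniform convergence on absolutely convex compact subsets of $\mathcal{FV}(\Omega)$) with the topology of uniform convergence on equicontinuous sets; $S\colon \mathcal{FV}(\Omega)\varepsilon E\to E^\Omega$, $S(u)(x):=u(\delta_x)$. If $\mathcal{FV}(\Omega)$ and $\mathcal{FV}(\Omega,E)$ are dom-spaces built with the same data $\Omega,\mathcal{V},\mathcal{M}_{\mathrm{top}},\mathcal{M}_0,\mathcal{M}_r,(\omega_m)$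 and operators $T^{\mathbb{K}}_m$ resp. $T^E_m$, then $(T^E_m,T^{\mathbb{K}}_m)_{m\in\mathcal{M}}$ is a defining family for $(\mathcal{FV},E)$. It is consistent if for all $u\in\mathcal{FV}(\Omega)\varepsilon E$, $m\in\mathcal{M}$, $x\in\omega_m$: $S(u)\in\operatorname{dom}T^E_m$, the restriction of $T^{\mathbb{K}}_{m,x}$ to $\mathcal{FV}(\Omega)$ lies in $\mathcal{FV}(\Omega)'$, and $T^E_m(S(u))(x)=u(T^{\mathbb{K}}_{m,x})$. It is strong if for all $e'\in E'$, $f\in\mathcal{FV}(\Omega,E)$, $m\in\mathcal{M}$: $e'\circ f\in\operatorname{dom}T^{\mathbb{K}}_m$ and $T^{\mathbb{K}}_m(e'\circ f)=e'\circ T^E_m(f)$ on $\omega_m$. A set $U\subset\bigcup_{m\in\mathcal{M}}\{m\}\times\omega_m$ is a set of uniqueness for $\mathcal{FV}(\Omega)$ if $T^{\mathbb{K}}_{m,x}\in\mathcal{FV}(\Omega)'$ for all $(m,x)\in U$ and every $f\in\mathcal{FV}(\Omega)$ with $T^{\mathbb{K}}_m(f)(x)=0$ for all $(m,x)\in U$ is $0$. For separating $G\subset E'$, $\mathcal{FV}_G(U,E)$ is the set of $f\colon U\to E$ such that for every $e'\in G$ there is (a necessarily unique) $f_{e'}\in\mathcal{FV}(\Omega)$ with $T^{\mathbb{K}}_m(f_{e'})(x)=e'(f(m,x))$ for all $(m,x)\in U$. For strong consistent families the map $R_{U,G}$ in the claim takes values in $\mathcal{FV}_G(U,E)$. *)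

(* Defs.v *)
From HB Require Import structures.
From mathcomp Require Import all_boot all_order all_algebra.
Set Implicit Arguments. Unset Strict Implicit. Unset Printing Implicit Defensive.
Import Order.TTheory GRing.Theory Num.Theory.
Local Open Scope ring_scope.

Section Defs.
Variable K : numFieldType.

Definition is_seminorm (V : lmodType K) (q : V -> K) :=
  [/\ forall v, 0 <= q v,
      forall v w, q (v + w) <= q v + q w &
      forall (c : K) v, q (c *: v) = `|c| * q v].

(* (p_a)_{a in A} is a directed fundamental system of seminorms of a
   Hausdorff locally convex topology on V *)
Definition lcHs (V : lmodType K) (A : Type) (p : A -> V -> K) :=
  [/\ inhabited A,
      forall a, is_seminorm (p a),
      (forall a b, exists c (C : K), 0 <= C /\
          forall v, p a v <= C * p c v /\ p b v <= C * p c v) &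
      forall v, (forall a, p a v = 0) -> v = 0].

Definition nontrivial (V : lmodType K) := exists v : V, v != 0.

(* topological dual E': linear functionals whose preimage of the closed unit
   disc contains a basic 0-neighbourhood {v | p_{a_i} v <= r for all i} *)
Definition Edual (V : lmodType K) (A : Type) (p : A -> V -> K) (e : V -> K) :=
  (forall v w (a : K), e (a *: v + w) = a * e v + e w) /\
  exists n (idx : 'I_n -> A) (r : K), 0 < r /\
    forall v, (forall i, p (idx i) v <= r) -> `|e v| <= 1.

Definition separating (V : lmodType K) (A : Type) (p : A -> V -> K)
    (G : (V -> K) -> Prop) :=
  [/\ forall e, G e -> Edual p e,
      G (fun _ => 0),
      (forall e1 e2 (a : K), G e1 -> G e2 -> G (fun v => a * e1 v + e2 v)) &
      forall v, (forall e, G e -> e v = 0) -> v = 0].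

Record wdata := WData {
  Om : Type;
  Jt : Type;
  Lt : Type;
  Mt : Type;
  Ml : Lt -> Mt -> Prop;
  M0 : Mt -> Prop;
  Mr : Mt -> Prop;
  om : Mt -> Type;
  emb : forall m, Om -> om m;     (* inclusion Omega c omega_m (m in M_top) *)
  nu : Jt -> Lt -> Mt -> Om -> K
}.

Arguments Ml : clear implicits.
Arguments M0 : clear implicits.
Arguments Mr : clear implicits.
Arguments om : clear implicits.
Arguments nu : clear implicits.
Arguments emb : clear implicits.

Definition Mtop (D : wdata) (m : Mt D) := exists l, Ml D l m.

Definition wdata_ok (D : wdata) :=
  inhabited (Om D) /\ inhabited (Jt D) /\ inhabited (Lt D) /\
  (forall l : Lt D, exists m, Ml D l m) /\
  (forall m, inhabited (om D m)) /\
  (forall j l m x, 0 <= nu D j l m x) /\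
  (forall x l, exists j, forall m, Ml D l m -> 0 < nu D j l m x) /\
  (forall m : Mt D, ~ (Mtop m /\ M0 D m) /\ ~ (Mtop m /\ Mr D m) /\ ~ (M0 D m /\ Mr D m)) /\
  (forall m : Mt D, [\/ Mtop m, M0 D m | Mr D m]) /\
  (forall m : Mt D, Mtop m -> injective (emb D m)).

Record opfam (D : wdata) (F : lmodType K) := OpFam {
  odom : forall m : Mt D, (Om D -> F) -> Prop;
  oT : forall m : Mt D, (Om D -> F) -> (om D m -> F)
}.

Arguments oT [D F] o m _ _.

Definition opfam_ok (D : wdata) (F : lmodType K) (T : opfam D F) :=
  forall m, odom T m (fun _ => 0) /\
    forall (f g : Om D -> F) (a : K), odom T m f -> odom T m g ->
      odom T m (fun x => a *: f x + g x) /\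
      oT T m (fun x => a *: f x + g x) = (fun y => a *: oT T m f y + oT T m g y).

Section Spaces.
Variables (D : wdata) (F : lmodType K) (A : Type) (p : A -> F -> K)
  (T : opfam D F).

Definition Wsp (f : Om D -> F) :=
  (forall m, odom T m f) /\ (forall m, M0 D m -> forall y, oT T m f y = 0).

(* FVqle i f r  <->  |f|_{j,l,alpha} <= r  with i = (j,l,alpha) *)
Definition FVqle (i : Jt D * Lt D * A) (f : Om D -> F) (r : K) :=
  forall (x : Om D) (m : Mt D), Ml D i.1.2 m ->
    p i.2 (oT T m f (emb D m x)) * nu D i.1.1 i.1.2 m x <= r.

Definition FVsp (f : Om D -> F) :=
  Wsp f /\ forall i, exists B, FVqle i f B.

Definition FVdirected :=
  forall i1 i2, exists i3 (C : K), 0 <= C /\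
    forall f, FVsp f -> forall r, FVqle i3 f r ->
      FVqle i1 f (C * r) /\ FVqle i2 f (C * r).
End Spaces.

(* scalar case: F = K with the single seminorm |.| *)
Definition Kp : unit -> K^o -> K := fun _ c => `|(c : K)|.

Section Scalar.
Variables (D : wdata) (TK : opfam D K^o).

Definition FVK (f : Om D -> K) := FVsp Kp TK f.

Definition FVdual (y : (Om D -> K) -> K) :=
  (forall f g (a : K), FVK f -> FVK g ->
      y (fun x => a * f x + g x) = a * y f + y g) /\
  exists n (idx : 'I_n -> Jt D * Lt D * unit) (r : K), 0 < r /\
    forall f, FVK f -> (forall i, FVqle Kp TK (idx i) f r) -> `|y f| <= 1.

Definition FVopen (O : (Om D -> K) -> Prop) :=
  forall f, O f -> FVK f ->
    exists n (idx : 'I_n -> Jt D * Lt D * unit) (eps : K), 0 < eps /\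
      forall g, FVK g -> (forall i, FVqle Kp TK (idx i) (fun x => g x - f x) eps) ->
        O g.

Definition FVcompact (C : (Om D -> K) -> Prop) :=
  (forall f, C f -> FVK f) /\
  forall (I : Type) (O : I -> (Om D -> K) -> Prop),
    (forall i, FVopen (O i)) -> (forall f, C f -> exists i, O i f) ->
    exists n (idx : 'I_n -> I), forall f, C f -> exists k, O (idx k) f.

Definition absconvex (C : (Om D -> K) -> Prop) :=
  forall f g (a b : K), C f -> C g -> `|a| + `|b| <= 1 ->
    C (fun x => a * f x + b * g x).

Variables (E : lmodType K) (A : Type) (p : A -> E -> K).

(* FV(Omega) eps E: continuous linear maps FV(Omega)'_kappa -> E
   (u is given on all functionals, only its values on FV(Omega)' matter) *)
Definition epsprod (u : ((Om D -> K) -> K) -> E) :=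
  (forall y z (a : K), FVdual y -> FVdual z ->
      u (fun f => a * y f + z f) = a *: u y + u z) /\
  forall alpha, exists n (Ks : 'I_n -> (Om D -> K) -> Prop) (r : K),
    [/\ 0 < r, (forall i, absconvex (Ks i) /\ FVcompact (Ks i)) &
      forall y, FVdual y -> (forall i f, Ks i f -> `|y f| <= r) ->
        p alpha (u y) <= 1].

Definition Smap (u : ((Om D -> K) -> K) -> E) : Om D -> E :=
  fun x => u (fun f => f x).

Definition Srange (f : Om D -> E) := exists u, epsprod u /\ f = Smap u.

Variable TE : opfam D E.

Definition defining_family :=
  [/\ opfam_ok TK, opfam_ok TE,
      FVdirected Kp TK, (forall x : Om D, FVdual (fun f => f x)) &
      FVdirected p TE].

Definition consistent :=
  forall u, epsprod u -> forall (m : Mt D) (x : om D m),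
    [/\ odom TE m (Smap u),
        FVdual (fun f => oT TK m f x) &
        oT TE m (Smap u) x = u (fun f => oT TK m f x)].

Definition strong :=
  forall e, Edual p e -> forall f, FVsp p TE f -> forall m : Mt D,
    odom TK m (fun x => e (f x)) /\
    forall y, oT TK m (fun x => e (f x)) y = e (oT TE m f y).

Definition uniqueness_set (U : {m : Mt D & om D m} -> Prop) :=
  (forall mx, U mx -> FVdual (fun f => oT TK (projT1 mx) f (projT2 mx))) /\
  forall f, FVK f ->
    (forall mx, U mx -> oT TK (projT1 mx) f (projT2 mx) = 0) -> f = (fun _ => 0).

Definition FVG (G : (E -> K) -> Prop) (U : {m : Mt D & om D m} -> Prop)
    (h : {m : Mt D & om D m} -> E) :=
  forall e, G e -> exists fe, FVK fe /\
    forall mx, U mx -> oT TK (projT1 mx) fe (projT2 mx) = e (h mx).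

Definition RUG (f : Om D -> E) : {m : Mt D & om D m} -> E :=
  fun mx => oT TE (projT1 mx) f (projT2 mx).
End Scalar.
End Defs.

Arguments Ml {K} D _ _ : rename.
Arguments M0 {K} D _ : rename.
Arguments Mr {K} D _ : rename.
Arguments om {K} D _ : rename.
Arguments nu {K} D _ _ _ _ : rename.
Arguments emb {K} D _ _ : rename.

(* Main.v *)
Require Import Defs.
From HB Require Import structures.
From mathcomp Require Import all_boot all_order all_algebra.
From mathcomp Require Import ring.
From Stdlib Require Import FunctionalExtensionality.
Set Implicit Arguments. Unset Strict Implicit. Unset Printing Implicit Defensive.
Import Order.TTheory GRing.Theory Num.Theory.
Local Open Scope ring_scope.
Notation OT T m := (@oT _ _ _ T m).

Lemma opT0 (K : numFieldType) (D : wdata K) (F : lmodType K) (T : opfam D F) :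
  opfam_ok T -> forall m y, OT T m (fun _ => 0) y = 0.
Proof.
move=> ok m y; have [h0 hl] := ok m.
have [_ e] := hl (fun _ => 0) (fun _ => 0) 1 h0 h0.
have := f_equal (fun h => h y) e.
have -> : (fun _ : Om D => 1 *: (0:F) + 0) = (fun _ => 0).
  by apply: functional_extensionality => x; rewrite scaler0 addr0.
rewrite scale1r => h; have := subrr (OT T m (fun _ => 0) y).
by rewrite {1}h addrK.
Qed.

Lemma opTlin (K : numFieldType) (D : wdata K) (F : lmodType K) (T : opfam D F) m f g a y :
  opfam_ok T -> odom T m f -> odom T m g ->
  OT T m (fun x => a *: f x + g x) y = a *: OT T m f y + OT T m g y.
Proof.
move=> ok hf hg; have [_ hl] := ok m.
by have [_ e] := hl f g a hf hg; rewrite e.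
Qed.

Lemma opdom_lin (K : numFieldType) (D : wdata K) (F : lmodType K) (T : opfam D F) m f g a :
  opfam_ok T -> odom T m f -> odom T m g -> odom T m (fun x => a *: f x + g x).
Proof. by move=> ok hf hg; have [_ hl] := ok m; have [] := hl f g a hf hg. Qed.

Lemma nu_ge0 (K : numFieldType) (D : wdata K) j l m x : wdata_ok D -> 0 <= nu D j l m x.
Proof. by move=> [_ [_ [_ [_ [_ [h _]]]]]]. Qed.

Lemma FVqle_mono (K : numFieldType) (D : wdata K) (F : lmodType K) (A : Type)
  (p : A -> F -> K) (T : opfam D F) i f r r' :
  FVqle p T i f r -> r <= r' -> FVqle p T i f r'.
Proof. by move=> h le x m hm; apply: le_trans (h x m hm) le. Qed.

Lemma FVK0 (K : numFieldType) (D : wdata K) (TK : opfam D K^o) :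
  opfam_ok TK -> FVK TK (fun _ => 0).
Proof.
move=> ok; split; first split.
- by move=> m; have [] := ok m.
- by move=> m _ y; rewrite opT0.
move=> i; exists 0 => x m _; by rewrite opT0 // /Kp normr0 mul0r.
Qed.

Lemma FVKlin (K : numFieldType) (D : wdata K) (TK : opfam D K^o) f g (a : K) :
  wdata_ok D -> opfam_ok TK -> FVK TK f -> FVK TK g ->
  FVK TK (fun x => a * f x + g x).
Proof.
move=> wd ok [[df zf] bf] [[dg zg] bg]; split; first split.
- by move=> m; exact: (opdom_lin a ok (df m) (dg m)).
- by move=> m hm y; rewrite (opTlin _ _ ok (df m) (dg m)) zf // zg // scaler0 addr0.
move=> i; have [B1 h1] := bf i; have [B2 h2] := bg i.
exists (`|a| * B1 + B2) => x m hm.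
rewrite (opTlin _ _ ok (df m) (dg m)) /Kp.
have hn := nu_ge0 i.1.1 i.1.2 m x wd.
apply: le_trans (_ : (`|a| * `|OT TK m f (emb D m x)| + `|OT TK m g (emb D m x)|) * nu D i.1.1 i.1.2 m x <= _).
  apply: ler_wpM2r => //; apply: le_trans (ler_normD _ _) _.
  by rewrite normrM.
rewrite mulrDl -mulrA; apply: lerD; last exact: h2.
by apply: ler_wpM2l => //; exact: h1.
Qed.

Lemma FVdual_zero_on (K : numFieldType) (D : wdata K) (TK : opfam D K^o) z :
  wdata_ok D -> opfam_ok TK -> (forall f, FVK TK f -> z f = 0) -> FVdual TK z.
Proof.
move=> wd ok hz; split.
  by move=> f g a hf hg; rewrite !hz ?mulr0 ?addr0 //; exact: FVKlin.
have [_ [[j] [[l] _]]] := wd.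
exists 0%N, (fun _ => (j, l, tt)), 1; split => //.

by move=> f hf _; rewrite hz // normr0 ler01.
Qed.

Lemma opTlinK (K : numFieldType) (D : wdata K) (T : opfam D K^o) m f g (a : K) y :
  opfam_ok T -> odom T m f -> odom T m g ->
  OT T m (fun x => a * f x + g x) y = a * OT T m f y + OT T m g y.
Proof. exact: opTlin. Qed.

Lemma ydual0 (K : numFieldType) (D : wdata K) (TK : opfam D K^o) y :
  opfam_ok TK -> FVdual TK y -> y (fun _ => 0) = 0.
Proof.
move=> ok [lin _]; have := lin _ _ 1 (FVK0 ok) (FVK0 ok).
have -> : (fun x : Om D => 1 * (0:K) + 0) = (fun _ => 0).
  by apply: functional_extensionality => x; rewrite mulr0 addr0.
rewrite mul1r => h; have := subrr (y (fun _ => 0)).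
by rewrite {1}h addrK.
Qed.

Lemma FVdual_scale (K : numFieldType) (D : wdata K) (TK : opfam D K^o) y (c : K) :
  wdata_ok D -> opfam_ok TK -> FVdual TK y -> FVdual TK (fun f => c * y f).
Proof.
move=> wd ok hy; have y0 := ydual0 ok hy; move: hy => [lin [n [idx [r [r0 H]]]]].
split.
  by move=> f g a hf hg; rewrite lin // mulrDr mulrCA.
set t := `|c| + 1.
have t0 : 0 < t by rewrite /t ltr_wpDl.
have nt : `|t| = t by apply: gtr0_norm.
have ti : 0 < t^-1 by rewrite invr_gt0.
exists n, idx, (r / t); split; first by rewrite divr_gt0.
move=> f hf hq.
have hg : FVK TK (fun x => t * f x + 0) by apply: FVKlin => //; exact: FVK0.
have hq' : forall i, FVqle (Kp (K:=K)) TK (idx i) (fun x => t * f x + 0) r.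
  move=> i x m hm; rewrite /Kp opTlinK //; last first.
  - by have [] := ok m.
  - by have [[]] := hf.
  rewrite opT0 // addr0 normrM nt -mulrA.
  have := hq i x m hm; rewrite /Kp => h.
  by rewrite -(ler_pM2r ti) mulrAC divff ?mul1r ?gt_eqF.
have := H _ hg hq'; rewrite lin //; last exact: FVK0.
rewrite y0 addr0 normrM nt normrM => h; apply: le_trans h.
by apply: ler_wpM2r => //; rewrite /t lerDl.
Qed.

Lemma nonneg_zero (K : numFieldType) (x : K) :
  0 <= x -> (forall t : K, `|t| * x <= 1) -> x = 0.
Proof.
move=> x0 h; move: x0; rewrite le_eqVlt => /orP [/eqP -> //|xp].
have := h (2 / x).
rewrite normrM normfV (gtr0_norm xp) mulfVK ?gt_eqF //.
by rewrite normr_nat lern1.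
Qed.

Lemma FVqle_norm (K : numFieldType) (D : wdata K) (TK : opfam D K^o) i f B :
  wdata_ok D -> FVqle (Kp (K:=K)) TK i f B -> FVqle (Kp (K:=K)) TK i f `|B|.
Proof.
move=> wd h x m hm; have := h x m hm.
have v0 : 0 <= Kp tt (OT TK m f (emb D m x)) * nu D i.1.1 i.1.2 m x.
  by apply: mulr_ge0; [exact: normr_ge0| exact: nu_ge0].
move=> le; rewrite ger0_norm //; exact: le_trans le.
Qed.

Lemma le_sum_norm (K : numFieldType) n (F : 'I_n -> K) k : `|F k| <= \sum_(j < n) `|F j|.
Proof.
rewrite (bigD1 k) //= lerDl; apply: sumr_ge0 => j _; exact: normr_ge0.
Qed.

Lemma compact_bound (K : numFieldType) (D : wdata K) (TK : opfam D K^o) C i :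
  wdata_ok D -> opfam_ok TK -> FVcompact TK C ->
  exists M, forall f, C f -> FVqle (Kp (K:=K)) TK i f M.
Proof.
move=> wd ok [hC cov].
pose O := fun (s : K) (f : Om D -> K) => exists r, r < `|s| /\ FVqle (Kp (K:=K)) TK i f r.
have hO : forall s, FVopen TK (O s).
  move=> s f [r [rs hr]] hf.
  set d := `|s| - r.
  have d0 : 0 < d by rewrite /d subr_gt0.
  have d20 : 0 < d / 2 by rewrite divr_gt0.
  exists 1%N, (fun _ => i), (d / 2); split => // g hg hq.
  exists (r + d / 2); split.
    have e : r + d / 2 + d / 2 = `|s| by rewrite -addrA -splitr /d addrC subrK.
    by rewrite -[X in _ < X]e ltrDl.
  have [[df _] _] := hf; have [[dg _] _] := hg.
  move=> x m hm.
  have dgf : odom TK m (fun x => g x - f x).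
    have -> : (fun x => g x - f x) = (fun x => (-1) * f x + g x).
      by apply: functional_extensionality => z; rewrite mulN1r addrC.
    exact: (opdom_lin (-1) ok (df m) (dg m)).
  have eg : g = (fun x => 1 * (g x - f x) + f x).
    by apply: functional_extensionality => z; rewrite mul1r subrK.
  rewrite {1}eg opTlinK // mul1r /Kp.
  have hn := nu_ge0 i.1.1 i.1.2 m x wd.
  apply: le_trans (_ : (`|OT TK m (fun x => g x - f x) (emb D m x)| + `|OT TK m f (emb D m x)|) * nu D i.1.1 i.1.2 m x <= _).
    by apply: ler_wpM2r => //; apply: ler_normD.
  rewrite mulrDl addrC; apply: lerD; first exact: hr.
  exact: (hq ord0).
have hcov : forall f, C f -> exists s, O s f.
  move=> f Cf; have [_ hb] := hC f Cf; have [B hB] := hb i.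
  exists (`|B| + 1), `|B|; split; last exact: FVqle_norm.
  have hB0 : 0 <= `|B| + 1 by rewrite addr_ge0.
  by rewrite (ger0_norm hB0) ltrDl.
have [n [idx hidx]] := cov K O hO hcov.
exists (\sum_(k < n) `|idx k|) => f Cf.
have [k [r [rs hr]]] := hidx f Cf.
apply: FVqle_mono hr _; apply: le_trans (ltW rs) _; exact: le_sum_norm.
Qed.

Lemma compacts_bound (K : numFieldType) (D : wdata K) (TK : opfam D K^o) n
  (Ks : 'I_n -> (Om D -> K) -> Prop) i :
  wdata_ok D -> opfam_ok TK -> (forall k, FVcompact TK (Ks k)) ->
  exists M, 0 <= M /\ forall k f, Ks k f -> FVqle (Kp (K:=K)) TK i f M.
Proof.
move=> wd ok hK.
have [Mk hM] := fin_all_exists (fun k => compact_bound i wd ok (hK k)).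
exists (\sum_(k < n) `|Mk k|); split; first by apply: sumr_ge0 => k _.
move=> k f hf; apply: FVqle_mono (FVqle_norm wd (hM k f hf)) _.
exact: le_sum_norm.
Qed.

Lemma u_zero_on (K : numFieldType) (D : wdata K) (TK : opfam D K^o) (E : lmodType K)
  (A : Type) (p : A -> E -> K) u y :
  lcHs p -> wdata_ok D -> opfam_ok TK -> epsprod TK p u ->
  (forall f, FVK TK f -> y f = 0) -> u y = 0.
Proof.
move=> [_ hsn _ hsep] wd ok [lin cont] hz; apply: hsep => a.
have [p0 _ phom] := hsn a.
have [n [Ks [r [r0 hK hc]]]] := cont a.
apply: nonneg_zero => // t.
have yd : FVdual TK y by apply: FVdual_zero_on.
have zd : FVdual TK (fun f => (t - 1) * y f + y f).
  by apply: FVdual_zero_on => // f hf; rewrite hz // mulr0 addr0.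
have := hc _ zd.
rewrite lin // scalerBl scale1r subrK phom; apply => k f hf.
have [_ [hC _]] := hK k.
by rewrite hz ?mulr0 ?addr0 ?normr0 ?ltW //; exact: hC.
Qed.

Lemma Smap_FV (K : numFieldType) (D : wdata K) (TK : opfam D K^o) (E : lmodType K)
  (A : Type) (p : A -> E -> K) (TE : opfam D E) u :
  lcHs p -> wdata_ok D -> defining_family TK p TE -> consistent TK p TE ->
  epsprod TK p u -> FVsp p TE (Smap u).
Proof.
move=> hl wd [okK okE _ _ _] hcons hu.
have wd' := wd; move: wd' => [_ [_ [_ [_ [hom _]]]]].
split; first split.
- move=> m; have [x] := hom m; by have [] := hcons u hu m x.
- move=> m hm0 y; have [_ _ ->] := hcons u hu m y.
  apply: (u_zero_on hl wd okK hu) => f [[_ hf] _]; exact: hf.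
case=> [[j l] a].
have [lin cont] := hu.
have [n [Ks [r [r0 hK hc]]]] := cont a.
have [M [M0 hM]] := compacts_bound (j, l, tt) wd okK (fun k => (hK k).2).
exists ((M + 1) / r) => x m hm /=.
have [_ yd ->] := hcons u hu m (emb D m x).
set T := (fun f => OT TK m f (emb D m x)).
set nv := nu D j l m x.
have nv0 : 0 <= nv by exact: nu_ge0.
have M10 : 0 < M + 1 by rewrite ltr_wpDl.
set c := nv * (r / (M + 1)).
have c0 : 0 <= c by rewrite mulr_ge0 // ltW // divr_gt0.
have cd := FVdual_scale c wd okK yd.
have z0 : FVdual TK (fun _ => 0) by apply: FVdual_zero_on.
have := hc _ cd.
have -> : (fun f => c * T f) = (fun f => c * T f + (fun _ => 0) f).
  by apply: functional_extensionality => f; rewrite addr0.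
rewrite lin // (@u_zero_on _ _ _ _ _ _ _ (fun _ => 0) hl wd okK hu) // addr0.
have [_ hsn _ _] := hl; have [_ _ phom] := hsn a.
rewrite phom (ger0_norm c0) => h.
have q0 : 0 < r / (M + 1) by rewrite divr_gt0.
have hb : forall k f, Ks k f -> `|c * T f| <= r.
  move=> k f hf; rewrite normrM (ger0_norm c0) /c.
  have := hM k f hf x m hm; rewrite /Kp /= => hle.
  have -> : nv * (r / (M + 1)) * `|T f| = (`|T f| * nv) * (r / (M + 1)) by ring.
  apply: le_trans (ler_wpM2r (ltW q0) hle) _.
  rewrite mulrA ler_pdivrMr // [M * r]mulrC; apply: ler_wpM2l; first exact: ltW.
  by rewrite lerDl.
have h' := h hb.
rewrite ler_pdivlMr //.
have -> : p a (u T) * nv * r = (c * p a (u T)) * (M + 1).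
  rewrite /c; field; by rewrite gt_eqF.
by rewrite -[X in _ <= X]mul1r; apply: ler_wpM2r => //; exact: ltW.
Qed.

Lemma edual_bound (K : numFieldType) (E : lmodType K) (A : Type) (p : A -> E -> K) e :
  lcHs p -> Edual p e ->
  exists n (idx : 'I_n -> A) (r : K), 0 < r /\
    forall v, r * `|e v| <= \sum_(i < n) p (idx i) v.
Proof.
move=> [_ hsn _ _] [lin [n [idx [r [r0 H]]]]].
have e0 : e 0 = 0.
  have := lin 0 0 1; rewrite scaler0 addr0 mul1r => h.
  by have := subrr (e 0); rewrite {1}h addrK.
have esc : forall a v, e (a *: v) = a * e v.
  by move=> a v; have := lin v 0 a; rewrite !addr0 e0 addr0.
exists n, idx, r; split => // v.
set s := \sum_(i < n) p (idx i) v.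
have pge : forall i, 0 <= p (idx i) v by move=> i; have [] := hsn (idx i).
have s0 : 0 <= s by apply: sumr_ge0.
have ps : forall i, p (idx i) v <= s.
  by move=> i; rewrite /s (bigD1 i) //= lerDl; apply: sumr_ge0.
move: s0; rewrite le_eqVlt => /orP [/eqP s0|sp].
  have pz : forall i, p (idx i) v = 0.
    by move=> i; apply/eqP; rewrite eq_le pge andbT s0 ps.
  have -> : e v = 0.
    apply/eqP; rewrite -normr_eq0; apply/eqP; apply: nonneg_zero => // t.
    rewrite -normrM -esc; apply: H => i.
    by have [_ _ ->] := hsn (idx i); rewrite pz mulr0 ltW.
  by rewrite normr0 mulr0 -s0.
have q0 : 0 < r / s by rewrite divr_gt0.
have := H ((r / s) *: v).
rewrite esc normrM (gtr0_norm q0).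
have hp : forall i, p (idx i) ((r / s) *: v) <= r.
  move=> i; have [_ _ ->] := hsn (idx i); rewrite (gtr0_norm q0).
  apply: le_trans (ler_wpM2l (ltW q0) (ps i)) _.
  by rewrite divfK ?gt_eqF.
move=> /(_ hp) h.
have -> : r * `|e v| = (r / s * `|e v|) * s by field; rewrite gt_eqF.
by rewrite -[X in _ <= X]mul1r; apply: ler_wpM2r => //; exact: ltW.
Qed.

Lemma e_FVK (K : numFieldType) (D : wdata K) (TK : opfam D K^o) (E : lmodType K)
  (A : Type) (p : A -> E -> K) (TE : opfam D E) e f :
  lcHs p -> wdata_ok D -> strong TK p TE -> Edual p e -> FVsp p TE f ->
  FVK TK (fun x => e (f x)).
Proof.
move=> hl wd hstr he hf.
have e0 : e 0 = 0.
  have [lin _] := he; have := lin 0 0 1; rewrite scaler0 addr0 mul1r => h.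
  by have := subrr (e 0); rewrite {1}h addrK.
split; first split.
- by move=> m; have [] := hstr e he f hf m.
- move=> m hm0 y; have [_ ->] := hstr e he f hf m.
  by have [[_ z] _] := hf; rewrite z.
case=> [[j l] t].
have [n [idx [r [r0 hb]]]] := edual_bound hl he.
have [_ hfb] := hf.
have [B hB] := fin_all_exists (fun k => hfb (j, l, idx k)).
exists ((\sum_(k < n) `|B k|) / r) => x m hm /=.
have [_ ->] := hstr e he f hf m.
rewrite /Kp ler_pdivlMr // mulrAC.
have hn : 0 <= nu D j l m x by exact: nu_ge0.
apply: le_trans (ler_wpM2r hn (_ : `|e _| * r <= _)) _.
  by rewrite mulrC; exact: hb.
rewrite mulr_suml; apply: ler_sum => k _.
have := hB k x m hm; rewrite /= => hle.
have [p0 _ _] := (let: And4 _ h _ _ := hl in h) (idx k).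
have B0 : 0 <= B k := le_trans (mulr_ge0 (p0 _) hn) hle.
by rewrite (ger0_norm B0).
Qed.

Theorem proposition3p10 (K : numFieldType) (E : lmodType K) (A : Type)
    (p : A -> E -> K) (D : wdata K) (TK : opfam D K^o) (TE : opfam D E)
    (G : (E -> K) -> Prop) (U : {m : Mt D & om D m} -> Prop) :
  lcHs p -> nontrivial E -> wdata_ok D ->
  separating p G ->
  defining_family TK p TE -> strong TK p TE -> consistent TK p TE ->
  uniqueness_set TK U ->
  forall f g : Om D -> E,
    Srange TK p f -> Srange TK p g ->
    (forall mx, U mx -> RUG TE f mx = RUG TE g mx) ->
    f = g.
Proof.
move=> hl _ wd [hGd _ _ hGsep] hdef hstr hcons [_ huniq] f g [u [hu ->]] [v [hv ->]] hR.
have [okK okE _ _ _] := hdef.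
have hfu := Smap_FV hl wd hdef hcons hu.
have hfv := Smap_FV hl wd hdef hcons hv.
apply: functional_extensionality => x.
apply/eqP; rewrite -subr_eq0; apply/eqP; apply: hGsep => e he.
have hed := hGd e he.
have [lin _] := hed.
have hK := FVKlin (-1) wd okK (e_FVK hl wd hstr hed hfv) (e_FVK hl wd hstr hed hfu).
have := huniq _ hK.
have hh : forall mx, U mx ->
  OT TK (projT1 mx) (fun x => -1 * e (Smap v x) + e (Smap u x)) (projT2 mx) = 0.
  move=> mx hmx; case: mx hmx => m y hmx /=.
  have [dv ev] := hstr e hed _ hfv m.
  have [du eu] := hstr e hed _ hfu m.
  rewrite opTlinK // ev eu.
  have := hR _ hmx; rewrite /RUG /= => ->.
  ring.
move=> /(_ hh) /(congr1 (fun h => h x)) /=.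
have := lin (Smap v x) (Smap u x) (-1).
rewrite scaleN1r addrC => <-.
by [].
Qed.
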